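(* Let $(A,\succ,\prec)$ be an anti-pre-Novikov algebra with associated Novikov algebra $(A,\circ)$, and let $s=\sum_i a_i\otimes b_i\in A\otimes A$ be skew-symmetric ($\tau(s)=-s$). The following are equivalent: (a) $s$ is a solution of the anti-pre-Novikov Yang–Baxter equation in $(A,\succ,\prec)$, i.e. $\sum_{i,j}a_i\circ a_j\otimes b_i\otimes b_j+\sum_{i,j}a_j\otimes a_i\otimes(b_i\odot b_j)+\sum_{i,j}a_i\otimes(b_i\prec a_j)\otimes b_j=0$; (b) $T_s$ is an $\mathcal O$-operator on $(A,\circ)$ associated to the representation $(A^*,-L_{\odot}^*,R_{\prec}^* )$; (c) $T_s$ is an $\mathcal O$-operator on $(A,\succ,\prec)$ associated to the representation $(A^*,-L_{\star}^*,-R_{\succ}^*,R_{\odot}^*,R_{\circ}^* )$.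
   Context: $A$ is finite-dimensional over a field $k$. An anti-pre-Novikov algebra is $(A,\succ,\prec)$ such that with $x\circ y=x\succ y+x\prec y$: $(x\circ y-y\circ x)\succ z=y\succ(x\succ z)-x\succ(y\succ z)$; $x\prec(y\circ z)=(y\succ x)\prec z-(x\prec y)\prec z-y\succ(x\prec z)$; $(x\circ y)\succ z=-(x\succ z)\prec y$; $(x\prec y)\prec z=(x\prec z)\prec y$; $(x\circ y-y\circ x)\prec z=x\succ(y\circ z)-y\succ(x\circ z)$; $(A,\circ)$ is then a Novikov algebra. Notation: $x\odot y=x\succ y+y\prec x$; $L_\ast(x)y=x\ast y$, $R_\ast(x)y=y\ast x$; $L_{\star}=L_{\circ}+R_{\circ}$, $L_{\odot}=L_{\succ}+R_{\prec}$, $R_{\odot}=R_{\succ}+L_{\prec}$; for $f:A\to\mathrm{End}(A)$, $\langle f^*(x)\zeta,y\rangle=-\langle\zeta,f(x)y\rangle$; $T_s:A^*\to A$, $\langle T_s(\zeta),\eta\rangle=\langle s,\zeta\otimes\eta\rangle$. An $\mathcal O$-operator on a Novikov algebra $(A,\circ)$ associated to a representation $(V,l,r)$ is a linear $T:V\to A$ with $T(u)\circ T(v)=T(l(T(u))v+r(T(v))u)$. An $\mathcal O$-operator on $(A,\succ,\prec)$ associated to a representation $(V,l_{\succ},r_{\succ},l_{\prec},r_{\prec})$ is a linear $T:V\to A$ with $T(u)\succ T(v)=T(l_{\succ}(T(u))v+r_{\succ}(T(v))u)$ and $T(u)\prec T(v)=T(l_{\prec}(T(u))v+r_{\prec}(T(v))u)$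 for all $u,v\in V$. (The tuples in (b),(c) are representations of $(A,\circ)$ and $(A,\succ,\prec)$ respectively.) *)

(* Defs.v *)
From HB Require Import structures.
From mathcomp Require Import all_boot all_order all_algebra.
Set Implicit Arguments. Unset Strict Implicit. Unset Printing Implicit Defensive.
Import GRing.Theory.
Local Open Scope ring_scope.

Section AntiPreNovikov.
Variables (K : fieldType) (A : vectType K).

Definition dual := 'Hom(A, K^o).

Definition bilinear_op (m : A -> A -> A) : Prop :=
  (forall (a : K) (x y z : A), m (a *: x + y) z = a *: m x z + m y z) /\
  (forall (a : K) (x y z : A), m x (a *: y + z) = a *: m x y + m x z).

Definition circ (succ prec : A -> A -> A) (x y : A) : A := succ x y + prec x y.
Definition odot (succ prec : A -> A -> A) (x y : A) : A := succ x y + prec y x.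

Definition anti_pre_Novikov (succ prec : A -> A -> A) : Prop :=
  let o := circ succ prec in
  bilinear_op succ /\ bilinear_op prec /\
  (forall x y z, succ (o x y - o y x) z = succ y (succ x z) - succ x (succ y z)) /\
  (forall x y z, prec x (o y z) =
      prec (succ y x) z - prec (prec x y) z - succ y (prec x z)) /\
  (forall x y z, succ (o x y) z = - prec (succ x z) y) /\
  (forall x y z, prec (prec x y) z = prec (prec x z) y) /\
  (forall x y z, prec (o x y - o y x) z = succ x (o y z) - succ y (o x z)).

(* Operators A -> End(A) are encoded as f : A -> A -> A with f x y = f(x) y.
   L_*(x) y = x * y,  R_*(x) y = y * x. *)
Definition Lmul (m : A -> A -> A) (x y : A) : A := m x y.
Definition Rmul (m : A -> A -> A) (x y : A) : A := m y x.
Definition Lstar (succ prec : A -> A -> A) (x y : A) : A :=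
  Lmul (circ succ prec) x y + Rmul (circ succ prec) x y.
Definition Lodot (succ prec : A -> A -> A) (x y : A) : A :=
  Lmul succ x y + Rmul prec x y.
Definition Rodot (succ prec : A -> A -> A) (x y : A) : A :=
  Rmul succ x y + Lmul prec x y.

Definition dualrep (f : A -> A -> A) (x : A) (zeta : dual) : dual :=
  linfun (fun y : A => (- zeta (f x y)) : K^o).
Definition negrep (r : A -> dual -> dual) (x : A) (zeta : dual) : dual :=
  - r x zeta.

(* Tensors are given as finite sums of pure tensors; an element of
   A (x) A (resp. A (x) A (x) A) is identified, as usual in finite dimension,
   with its pairing against A^# (x) A^# (resp. A^# (x) A^# (x) A^#):
   <x (x) y, zeta (x) eta> = zeta(x) eta(y). *)

Definition tensor2 (m : nat) (a b : 'I_m -> A) (zeta eta : dual) : K :=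
  \sum_(i < m) zeta (a i) * eta (b i).

Definition skew_symmetric (m : nat) (a b : 'I_m -> A) : Prop :=
  forall zeta eta : dual, tensor2 b a zeta eta = - tensor2 a b zeta eta.

Definition APN_YBE (succ prec : A -> A -> A) (m : nat) (a b : 'I_m -> A) : Prop :=
  forall zeta eta theta : dual,
    \sum_(i < m) \sum_(j < m)
       (zeta (circ succ prec (a i) (a j)) * eta (b i) * theta (b j)
      + zeta (a j) * eta (a i) * theta (odot succ prec (b i) (b j))
      + zeta (a i) * eta (prec (b i) (a j)) * theta (b j)) = 0.

(* T_s : A^# -> A, <T_s(zeta), eta> = <s, zeta (x) eta>,
   i.e. T_s(zeta) = sum_i zeta(a_i) b_i *)
Definition Ts (m : nat) (a b : 'I_m -> A) (zeta : dual) : A :=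
  \sum_(i < m) zeta (a i) *: b i.

Definition O_operator_Nov (o : A -> A -> A) (l r : A -> dual -> dual)
    (T : dual -> A) : Prop :=
  linear T /\
  forall u v : dual, o (T u) (T v) = T (l (T u) v + r (T v) u).

Definition O_operator_APN (succ prec : A -> A -> A)
    (lsucc rsucc lprec rprec : A -> dual -> dual) (T : dual -> A) : Prop :=
  linear T /\
  (forall u v : dual, succ (T u) (T v) = T (lsucc (T u) v + rsucc (T v) u)) /\
  (forall u v : dual, prec (T u) (T v) = T (lprec (T u) v + rprec (T v) u)).

End AntiPreNovikov.

(* Main.v *)
Require Import Defs.
From HB Require Import structures.
From mathcomp Require Import all_boot all_order all_algebra.
From mathcomp Require Import ring.
Import GRing.Theory.
Local Open Scope ring_scope.

Section S.
Variables (K : fieldType) (A : vectType K).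
Definition lin (f : A -> K) := forall (k : K) (x y : A), f (k *: x + y) = k * f x + f y.

Lemma linfunE' (f : A -> K) (lf : lin f) (x : A) : (linfun (f : A -> K^o) : dual A) x = f x.
Proof.
pose F : {linear A -> K^o} := HB.pack (f : A -> K^o) (GRing.isLinear.Build K A K^o *:%R (f : A -> K^o) lf).
exact: (lfunE F x).
Qed.

Lemma thD (th : dual A) x y : th (x + y) = th x + th y.
Proof. exact: linearD. Qed.
Lemma thZ (th : dual A) (k : K) x : th (k *: x) = k * th x.
Proof. exact: linearZ. Qed.
Lemma thN (th : dual A) x : th (- x) = - th x.
Proof. exact: linearN. Qed.
Lemma thsum (th : dual A) n (F : 'I_n -> A) : th (\sum_(i < n) F i) = \sum_(i < n) th (F i).
Proof. exact: linear_sum. Qed.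

Lemma lin_dual (th : dual A) : lin (fun x => th x).
Proof. by move=> k x y; rewrite thD thZ. Qed.

Lemma sep (x : A) : (forall th : dual A, th x = 0) -> x = 0.
Proof.
move=> H.
rewrite (coord_vbasis (memvf x)).
apply: big1 => i _.
have l : lin (coord (vbasis fullv) i).
  by move=> k u v; rewrite linearP.
have := H (linfun (coord (vbasis fullv) i : A -> K^o)).
by rewrite linfunE' // => ->; rewrite scale0r.
Qed.

Section Bil.
Variable (mu : A -> A -> A) (hm : bilinear_op mu).
Lemma bL0 z : mu 0 z = 0.
Proof.
have := hm.1 1 0 0 z; rewrite !scale1r addr0 => H.
by apply: (@addrI _ (mu 0 z)); rewrite addr0 -H.
Qed.
Lemma bR0 z : mu z 0 = 0.
Proof.
have := hm.2 1 z 0 0; rewrite !scale1r addr0 => H.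
by apply: (@addrI _ (mu z 0)); rewrite addr0 -H.
Qed.
Lemma bLZ k x z : mu (k *: x) z = k *: mu x z.
Proof. by have := hm.1 k x 0 z; rewrite addr0 bL0 addr0. Qed.
Lemma bRZ k x z : mu z (k *: x) = k *: mu z x.
Proof. by have := hm.2 k z x 0; rewrite addr0 bR0 addr0. Qed.
Lemma bLD x y z : mu (x + y) z = mu x z + mu y z.
Proof. by have := hm.1 1 x y z; rewrite !scale1r. Qed.
Lemma bRD x y z : mu z (x + y) = mu z x + mu z y.
Proof. by have := hm.2 1 z x y; rewrite !scale1r. Qed.
Lemma bLsum n (F : 'I_n -> A) z : mu (\sum_(i < n) F i) z = \sum_(i < n) mu (F i) z.
Proof. exact: (big_morph (fun x => mu x z) (fun x y => bLD x y z) (bL0 z)). Qed.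
Lemma bRsum n (F : 'I_n -> A) z : mu z (\sum_(i < n) F i) = \sum_(i < n) mu z (F i).
Proof. exact: (big_morph (fun x => mu z x) (fun x y => bRD x y z) (bR0 z)). Qed.
Lemma linL (th : dual A) z : lin (fun y => th (mu y z)).
Proof. by move=> k x y; rewrite hm.1 thD thZ. Qed.
Lemma linR (th : dual A) z : lin (fun y => th (mu z y)).
Proof. by move=> k x y; rewrite hm.2 thD thZ. Qed.
End Bil.

Lemma lin_add f g : lin f -> lin g -> lin (fun y => f y + g y).
Proof. by move=> hf hg k x y; rewrite hf hg; ring. Qed.
Lemma lin_opp f : lin f -> lin (fun y => - f y).
Proof. by move=> hf k x y; rewrite hf; ring. Qed.

Section Main.
Variables (succ prec : A -> A -> A) (m : nat) (a b : 'I_m -> A).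
Hypotheses (hs : bilinear_op succ) (hp : bilinear_op prec) (sk : skew_symmetric a b).

Lemma hc : bilinear_op (circ succ prec).
Proof.
split=> k x y z; rewrite /circ.
  by rewrite hs.1 hp.1 scalerDr; rewrite !addrA; congr (_ + _); rewrite -!addrA; congr (_ + _); rewrite addrC.
by rewrite hs.2 hp.2 scalerDr; rewrite !addrA; congr (_ + _); rewrite -!addrA; congr (_ + _); rewrite addrC.
Qed.

Notation T := (Ts a b).

Lemma skewL (f g : A -> K) : lin f -> lin g ->
  \sum_(i < m) f (a i) * g (b i) = - \sum_(i < m) f (b i) * g (a i).
Proof.
move=> lf lg; have := sk (linfun (f : A -> K^o)) (linfun (g : A -> K^o)).
rewrite /tensor2.
under eq_bigr do rewrite !linfunE' //.
under [in X in _ = - X]eq_bigr do rewrite !linfunE' //.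
by move=> ->; rewrite opprK.
Qed.

Lemma thT (th w : dual A) : th (T w) = \sum_(i < m) w (a i) * th (b i).
Proof. by rewrite /Ts thsum; apply: eq_bigr => i _; rewrite thZ. Qed.

Definition S (F : A -> A -> K) (p q : dual A) :=
  \sum_(j < m) \sum_(k < m) p (a j) * q (a k) * F (b j) (b k).

Lemma S_flip F p q : S (fun x y => F y x) p q = S F q p.
Proof.
rewrite /S exchange_big; apply: eq_bigr => j _; apply: eq_bigr => k _; ring.
Qed.

Lemma K1 (G : A -> A -> K) (lG : forall x, lin (G x)) (p th : dual A) :
  \sum_(i < m) (\sum_(j < m) p (a j) * G (b j) (a i)) * th (b i) = - S G p th.
Proof.
under eq_bigr do rewrite mulr_suml.
rewrite exchange_big /S -sumrN; apply: eq_bigr => j _.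
have := @skewL (G (b j)) (fun x => th x) (lG (b j)) (lin_dual th).
under eq_bigr do rewrite -mulrA.
rewrite -mulr_sumr => ->.
rewrite mulrN mulr_sumr; congr (- _); apply: eq_bigr => k _; ring.
Qed.


Lemma thLT (mu : A -> A -> A) (hm : bilinear_op mu) (th u : dual A) y :
  th (mu (T u) y) = \sum_(j < m) u (a j) * th (mu (b j) y).
Proof. by rewrite /Ts bLsum // thsum; apply: eq_bigr => j _; rewrite bLZ // thZ. Qed.

Lemma thRT (mu : A -> A -> A) (hm : bilinear_op mu) (th u : dual A) y :
  th (mu y (T u)) = \sum_(j < m) u (a j) * th (mu y (b j)).
Proof. by rewrite /Ts bRsum // thsum; apply: eq_bigr => j _; rewrite bRZ // thZ. Qed.

Lemma thTT (mu : A -> A -> A) (hm : bilinear_op mu) (th u v : dual A) :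
  th (mu (T u) (T v)) = S (fun x y => th (mu x y)) u v.
Proof.
rewrite thLT // /S; apply: eq_bigr => j _; rewrite thRT // mulr_sumr.
by apply: eq_bigr => k _; ring.
Qed.

Lemma dualrepE (f : A -> A -> A) x (zeta : dual A) y :
  lin (fun y => zeta (f x y)) -> dualrep f x zeta y = - zeta (f x y).
Proof. by move=> lf; rewrite /dualrep linfunE' //; apply: lin_opp. Qed.

Ltac linsolve := move=> ? ? ?; rewrite /Lodot /Lstar /Rodot /Lmul /Rmul /circ
  ?hs.1 ?hs.2 ?hp.1 ?hp.2 ?hs.1 ?hs.2 ?hp.1 ?hp.2 !thD !thZ; ring.

Lemma Bside (u v th : dual A) :
  th (T (negrep (dualrep (Lodot succ prec)) (T u) v + dualrep (Rmul prec) (T v) u))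
  = - S (fun x y => v (succ x y)) u th - S (fun x y => v (prec y x)) u th
    + S (fun x y => u (prec y x)) v th.
Proof.
rewrite thT.
under eq_bigr => i _.
  rewrite add_lfunE /negrep opp_lfunE !dualrepE; last first.
  - by linsolve.
  - by linsolve.
  rewrite opprK /Lodot /Lmul /Rmul thD (thLT _ hs) (thRT _ hp) (thRT _ hp).
  over.
rewrite /=; under eq_bigr do rewrite mulrBl mulrDl.
rewrite sumrB big_split /=.
rewrite (K1 (fun x y => v (succ x y))); last by move=> x; apply: linR.
rewrite (K1 (fun x y => v (prec y x))); last by move=> x; apply: linL.
rewrite (K1 (fun x y => u (prec y x))); last by move=> x; apply: linL.
by rewrite opprK.
Qed.

Lemma C1side (u v th : dual A) :
  th (T (negrep (dualrep (Lstar succ prec)) (T u) v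
         + negrep (dualrep (Rmul succ)) (T v) u))
  = - S (fun x y => v (circ succ prec x y)) u th
    - S (fun x y => v (circ succ prec y x)) u th
    - S (fun x y => u (succ y x)) v th.
Proof.
rewrite thT.
under eq_bigr => i _.
  rewrite add_lfunE /negrep !opp_lfunE !dualrepE; last first.
  - by linsolve.
  - by linsolve.
  rewrite !opprK /Lstar /Lmul /Rmul thD (thLT _ hc) (thRT _ hc) (thRT _ hs).
  over.
rewrite /=; under eq_bigr do rewrite !mulrDl.
rewrite !big_split /=.
rewrite (K1 (fun x y => v (circ succ prec x y))); last by move=> x; apply: linR; apply: hc.
rewrite (K1 (fun x y => v (circ succ prec y x))); last by move=> x; apply: linL; apply: hc.
rewrite (K1 (fun x y => u (succ y x))); last by move=> x; apply: linL.
done.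
Qed.

Lemma C2side (u v th : dual A) :
  th (T (dualrep (Rodot succ prec) (T u) v
         + dualrep (Rmul (circ succ prec)) (T v) u))
  = S (fun x y => v (succ y x)) u th
    + S (fun x y => v (prec x y)) u th
    + S (fun x y => u (circ succ prec y x)) v th.
Proof.
rewrite thT.
under eq_bigr => i _.
  rewrite add_lfunE !dualrepE; last first.
  - by linsolve.
  - by linsolve.
  rewrite /Rodot /Lmul /Rmul thD (thRT _ hs) (thLT _ hp) (thRT _ hc).
  over.
rewrite /=; under eq_bigr do rewrite -!opprD mulNr !mulrDl.
rewrite sumrN !big_split /=.
rewrite (K1 (fun x y => v (succ y x))); last by move=> x; apply: linL.
rewrite (K1 (fun x y => v (prec x y))); last by move=> x; apply: linR.
rewrite (K1 (fun x y => u (circ succ prec y x))); last by move=> x; apply: linL; apply: hc.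
by rewrite !opprD !opprK.
Qed.
Lemma Yside (z e t : dual A) :
  \sum_(i < m) \sum_(j < m)
       (z (circ succ prec (a i) (a j)) * e (b i) * t (b j)
      + z (a j) * e (a i) * t (odot succ prec (b i) (b j))
      + z (a i) * e (prec (b i) (a j)) * t (b j))
  = S (fun x y => z (circ succ prec x y)) e t
    + S (fun x y => t (succ x y)) e z + S (fun x y => t (prec y x)) e z
    - S (fun x y => e (prec x y)) z t.
Proof.
under eq_bigr do rewrite !big_split.
rewrite !big_split /=.
have E1 : \sum_(i < m) \sum_(j < m) z (circ succ prec (a i) (a j)) * e (b i) * t (b j)
   = S (fun x y => z (circ succ prec x y)) e t.
  transitivity (- \sum_(i < m) \sum_(j < m) e (b i) * z (circ succ prec (a i) (b j)) * t (a j)).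
    rewrite -sumrN; apply: eq_bigr => i _.
    transitivity (e (b i) * \sum_(j < m) z (circ succ prec (a i) (a j)) * t (b j)).
      by rewrite mulr_sumr; apply: eq_bigr => j _; ring.
    rewrite (@skewL (fun y => z (circ succ prec (a i) y)) (fun x => t x)); last first.
    - exact: lin_dual.
    - by apply: linR; apply: hc.
    by rewrite mulrN mulr_sumr; congr (- _); apply: eq_bigr => j _; ring.
  rewrite /S [X in - X = _]exchange_big [RHS]exchange_big -sumrN; apply: eq_bigr => j _.
  transitivity (- (t (a j) * \sum_(i < m) z (circ succ prec (a i) (b j)) * e (b i))).
    by rewrite mulr_sumr; congr (- _); apply: eq_bigr => i _; ring.
  rewrite (@skewL (fun y => z (circ succ prec y (b j))) (fun x => e x)); last first.
  - exact: lin_dual.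
  - by apply: linL; apply: hc.
  by rewrite mulrN opprK mulr_sumr; apply: eq_bigr => i _; ring.
have E2 : \sum_(i < m) \sum_(j < m) z (a j) * e (a i) * t (odot succ prec (b i) (b j))
   = S (fun x y => t (succ x y)) e z + S (fun x y => t (prec y x)) e z.
  rewrite /S -big_split; apply: eq_bigr => i _; rewrite -big_split; apply: eq_bigr => j _.
  by rewrite /odot thD /=; ring.
have E3 : \sum_(i < m) \sum_(j < m) z (a i) * e (prec (b i) (a j)) * t (b j)
   = - S (fun x y => e (prec x y)) z t.
  rewrite /S -sumrN; apply: eq_bigr => i _.
  transitivity (z (a i) * \sum_(j < m) e (prec (b i) (a j)) * t (b j)).
    by rewrite mulr_sumr; apply: eq_bigr => j _; ring.
  rewrite (@skewL (fun y => e (prec (b i) y)) (fun x => t x)); last first.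
  - exact: lin_dual.
  - exact: linR.
  by rewrite mulrN mulr_sumr; congr (- _); apply: eq_bigr => j _; ring.
by rewrite E1 E2 E3 /=; ring.
Qed.
Definition Ss (p q r : dual A) := S (fun x y => r (succ x y)) p q.
Definition Sp (p q r : dual A) := S (fun x y => r (prec x y)) p q.

Lemma Sc (p q r : dual A) : S (fun x y => r (circ succ prec x y)) p q = Ss p q r + Sp p q r.
Proof.
rewrite /Ss /Sp /S -big_split; apply: eq_bigr => j _; rewrite -big_split.
by apply: eq_bigr => k _; rewrite /circ /= thD; ring.
Qed.

Definition Bf (u v z : dual A) := Ss u v z + Sp u v z + Ss u z v + Sp z u v - Sp z v u.

Lemma Bres (u v th : dual A) :
  th (circ succ prec (T u) (T v))
  - th (T (negrep (dualrep (Lodot succ prec)) (T u) v + dualrep (Rmul prec) (T v) u))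
  = Bf u v th.
Proof.
rewrite (thTT _ hc) Bside Sc.
rewrite (S_flip (fun x y => v (prec x y))) (S_flip (fun x y => u (prec x y))).
rewrite /Bf /Ss /Sp; ring.
Qed.

Lemma C1res (u v th : dual A) :
  th (succ (T u) (T v))
  - th (T (negrep (dualrep (Lstar succ prec)) (T u) v
         + negrep (dualrep (Rmul succ)) (T v) u))
  = Bf u th v + Bf th u v.
Proof.
rewrite (thTT _ hs) C1side Sc.
rewrite (S_flip (fun x y => v (circ succ prec x y))) (S_flip (fun x y => u (succ x y))) Sc.
rewrite /Bf /Ss /Sp; ring.
Qed.

Lemma C2res (u v th : dual A) :
  th (prec (T u) (T v))
  - th (T (dualrep (Rodot succ prec) (T u) v
         + dualrep (Rmul (circ succ prec)) (T v) u))
  = Bf u v th - (Bf u th v + Bf th u v).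
Proof.
rewrite (thTT _ hp) C2side.
rewrite (S_flip (fun x y => v (succ x y))) (S_flip (fun x y => u (circ succ prec x y))) Sc.
rewrite /Bf /Ss /Sp; ring.
Qed.

Lemma Yres (z e t : dual A) :
  \sum_(i < m) \sum_(j < m)
       (z (circ succ prec (a i) (a j)) * e (b i) * t (b j)
      + z (a j) * e (a i) * t (odot succ prec (b i) (b j))
      + z (a i) * e (prec (b i) (a j)) * t (b j))
  = Bf e t z.
Proof.
rewrite Yside Sc (S_flip (fun x y => t (prec x y))).
rewrite /Bf /Ss /Sp; ring.
Qed.

Lemma linT : linear T.
Proof.
move=> k u v; rewrite /Ts scaler_sumr -big_split; apply: eq_bigr => i _.
by rewrite add_lfunE scale_lfunE scalerDl scalerA.
Qed.

Lemma eq_by_th (x y : A) : (forall th : dual A, th x - th y = 0) -> x = y.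
Proof.
move=> H; apply/eqP; rewrite -subr_eq0; apply/eqP; apply: sep => th.
by rewrite linearB /= H.
Qed.

Lemma main_sec :
  (APN_YBE succ prec a b <->
     O_operator_Nov (circ succ prec)
       (negrep (dualrep (Lodot succ prec))) (dualrep (Rmul prec)) (Ts a b)) /\
  (O_operator_Nov (circ succ prec)
       (negrep (dualrep (Lodot succ prec))) (dualrep (Rmul prec)) (Ts a b) <->
   O_operator_APN succ prec
       (negrep (dualrep (Lstar succ prec))) (negrep (dualrep (Rmul succ)))
       (dualrep (Rodot succ prec)) (dualrep (Rmul (circ succ prec))) (Ts a b)).
Proof.
split; split.
- move=> Y; split; first exact: linT.
  move=> u v; apply: eq_by_th => th; rewrite Bres -Yres; exact: Y.
- move=> [_ H] z e t; rewrite Yres -Bres H; exact: subrr.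
- move=> [_ H]; split; first exact: linT.
  split=> u v; apply: eq_by_th => th.
    by rewrite C1res -!Bres !H !subrr addr0.
  by rewrite C2res -!Bres !H !subrr addr0 subrr.
- move=> [_ [H1 H2]]; split; first exact: linT.
  move=> u v; apply: eq_by_th => th.
  have := C2res u v th; rewrite -C1res H1 H2 !subrr subr0 => E; by rewrite Bres -E.
Qed.
End Main.
End S.

Theorem mainTheorem7 (K : fieldType) (A : vectType K)
    (succ prec : A -> A -> A) (m : nat) (a b : 'I_m -> A) :
  anti_pre_Novikov succ prec ->
  skew_symmetric a b ->
  (APN_YBE succ prec a b <->
     O_operator_Nov (circ succ prec)
       (negrep (dualrep (Lodot succ prec))) (dualrep (Rmul prec)) (Ts a b)) /\
  (O_operator_Nov (circ succ prec)
       (negrep (dualrep (Lodot succ prec))) (dualrep (Rmul prec)) (Ts a b) <->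
   O_operator_APN succ prec
       (negrep (dualrep (Lstar succ prec))) (negrep (dualrep (Rmul succ)))
       (dualrep (Rodot succ prec)) (dualrep (Rmul (circ succ prec))) (Ts a b)).
Proof.
move=> [hs [hp _]] sk.
exact: (@main_sec K A succ prec m a b hs hp sk).
Qed.
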